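(* Let $G=(V,v,E)$ be a directed graph with $V=\{1,\dots,n\}$, target node $v$, edge set $E$, and let $Z$ be a set of ordered node pairs with $Z\cap E=\emptyset$. For $\mathbf{y}\in\{0,1\}^{Z}$ with support $Y$, let $\mathcal{FR}(\mathbf{y})\ge0$ be the expected first return time to $v$ of the PageRank random walk on $(V,E\cup Y)$. Let $\mathcal{Y}$ be a constraint set with $\mathcal{Y}\cap\{0,1\}^{Z}\ne\emptyset$, and consider the problem $\min\{\mathcal{FR}(\mathbf{y}):\mathbf{y}\in\mathcal{Y}\cap\{0,1\}^{Z}\}$. For disjoint $S,N\subseteq Z$ let $\gamma(S,N)=\min\{\mathcal{FR}(\mathbf{y}): y_e=1\ \forall e\in S,\ y_e=0\ \forall e\in N,\ \mathbf{y}\in\{0,1\}^{Z}\}$. For $\bar{\mathbf{y}}\in\mathcal{Y}\cap\{0,1\}^{Z}$ with support $\bar Y$ define the cut $\mathrm{C}_1(\bar{\mathbf{y}})$: $\theta\ge\mathcal{FR}(\bar{\mathbf{y}})+\sum_{e\in\bar Y}\min\{0,\gamma(\emptyset,\{e\})-\mathcal{FR}(\bar{\mathbf{y}})\}(1-y_e)+\sum_{e\in Z\setminus\bar Y}\min\{0,\gamma(\{e\},\emptyset)-\mathcal{FR}(\bar{\mathbf{y}})\}y_e$, and, for a chosen ordering $e^1,\dots,e^K$ of $Z\setminus\bar Y$, the cut $\mathrm{C}_2(\bar{\mathbf{y}})$: $\theta\ge\mathcal{FR}(\bar{\mathbf{y}})+\sum_{e\in\bar Y}\min\{0,\gamma(\emptyset,\{e\})-\mathcal{FR}(\bar{\mathbf{y}})\}(1-y_e)+\sum_{k=1}^{K}\min\{0,-\mathcal{FR}(\bar{\mathbf{y}})+\gamma(\{e^k\},\{e^{k+1},\dots,e^K\})\}y_{e^k}$.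 Fix one of the two families $\mathrm{C}\in\{\mathrm{C}_1,\mathrm{C}_2\}$ and consider the cutting plane method: start with an empty cut set $\mathcal{C}$; repeatedly solve the relaxed master problem $\min\{\theta:(\theta,\mathbf{y})\text{ satisfies all cuts in }\mathcal{C},\ \mathbf{y}\in\mathcal{Y}\cap\{0,1\}^{Z},\ \theta\in\mathbb{R}_+\}$ to obtain an optimal $(\theta^*,\mathbf{y}^* )$; if $\theta^*\ge\mathcal{FR}(\mathbf{y}^* )$ stop, otherwise add the cut $\mathrm{C}(\mathbf{y}^* )$ to $\mathcal{C}$ and repeat. Then this method terminates after finitely many iterations, and at termination $\mathbf{y}^*$ is an optimal solution of $\min\{\mathcal{FR}(\mathbf{y}):\mathbf{y}\in\mathcal{Y}\cap\{0,1\}^{Z}\}$. Equivalently, this problem has the same optimal value as $\min\{\theta: (\theta,\mathbf{y})\text{ satisfies }\mathrm{C}(\bar{\mathbf{y}})\ \forall\bar{\mathbf{y}}\in\mathcal{Y}\cap\{0,1\}^{Z},\ \mathbf{y}\in\mathcal{Y}\cap\{0,1\}^{Z},\ \theta\in\mathbb{R}_+\}$.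
   Context: The PageRank random walk is the random walk defined by the PageRank (Google) matrix with fixed damping and teleportation, as in Csáji–Jungers–Blondel; the expected first return time to $v$ is the expected number of steps for the walk started at $v$ to return to $v$ (the reciprocal of $v$'s PageRank). *)

(* Defs.v *)
From mathcomp Require Import all_boot all_order all_algebra.
Set Implicit Arguments. Unset Strict Implicit. Unset Printing Implicit Defensive.
Import Order.TTheory GRing.Theory Num.Theory.
Local Open Scope ring_scope.

(* Nodes are 'I_n; ordered node pairs (edges / candidate edges) are 'I_n * 'I_n.
   A binary vector y in {0,1}^Z is represented by its support Y : {set pair}
   with Y \subset Z; y_e = (e \in Y)%:R. *)
Notation pair n := ('I_n * 'I_n)%type.

Section PageRank.
Variables (R : realFieldType) (n : nat).
Variable alpha : R.
Variable z : 'I_n -> R.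
Variable v : 'I_n.

Definition outdeg (A : {set pair n}) (u : 'I_n) : nat :=
  #|[set w | (u, w) \in A]|.

(* transition matrix of the simple random walk on (V, A); a dangling node
   (no out-edge) jumps according to the teleportation distribution z *)
Definition walk_mx (A : {set pair n}) : 'M[R]_n :=
  \matrix_(u, w) (if outdeg A u == 0%N then z w
                  else ((u, w) \in A)%:R / (outdeg A u)%:R).

Definition google_mx (A : {set pair n}) : 'M[R]_n :=
  \matrix_(u, w) (alpha * walk_mx A u w + (1 - alpha) * z w).

(* Google matrix with transitions into v removed (walk killed on hitting v) *)
Definition killed_mx (A : {set pair n}) : 'M[R]_n :=
  \matrix_(u, w) (if w == v then 0 else google_mx A u w).

(* h u = expected number of steps for the PageRank walk started at u to reach v
   at a time >= 1; it is the solution of the hitting-time equations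
     h u = 1 + \sum_(w != v) G u w * h w,   i.e.  h = (I - G_killed)^-1 1. *)
Definition hitting_times (A : {set pair n}) : 'cV[R]_n :=
  invmx (1%:M - killed_mx A) *m const_mx 1.

Definition first_return_time (A : {set pair n}) : R := hitting_times A v 0.

End PageRank.

Section Cuts.
Variables (R : realFieldType) (n : nat).
Variable FR : {set pair n} -> R.
Variable Z : {set pair n}.

(* gamma(S,N) = min { FR(y) : y_e = 1 on S, y_e = 0 on N, y in {0,1}^Z }.
   (The seed FR S is itself attained when S \subset Z and S, N disjoint.) *)
Definition gamma (S N : {set pair n}) : R :=
  \big[Num.min/FR S]_(Y in powerset Z | (S \subset Y) && [disjoint Y & N]) FR Y.

Definition yv (Y : {set pair n}) (e : pair n) : R := (e \in Y)%:R.

Definition cut1 (Yb Y : {set pair n}) : R :=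
  FR Yb
  + \sum_(e in Yb) Num.min 0 (gamma set0 [set e] - FR Yb) * (1 - yv Y e)
  + \sum_(e in Z :\: Yb) Num.min 0 (gamma [set e] set0 - FR Yb) * yv Y e.

(* right-hand side of cut C2(Yb) for the ordering s = [:: e^1; ...; e^K]
   of Z \ Yb, evaluated at y = Y *)
Definition cut2 (s : seq (pair n)) (Yb Y : {set pair n}) : R :=
  FR Yb
  + \sum_(e in Yb) Num.min 0 (gamma set0 [set e] - FR Yb) * (1 - yv Y e)
  + \sum_(k < size s)
      Num.min 0 (- FR Yb + gamma [set tnth (in_tuple s) k] [set x in drop k.+1 s])
        * yv Y (tnth (in_tuple s) k).

End Cuts.

(* which family of cuts is used; for C2 an ordering of Z \ Yb is chosen
   for every Yb by the function [ord] *)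
Inductive cut_family (n : nat) :=
| C1
| C2 of ({set pair n} -> seq (pair n)).

Definition cutrhs (R : realFieldType) (n : nat) (FR : {set pair n} -> R)
  (Z : {set pair n}) (C : cut_family n) (Yb Y : {set pair n}) : R :=
  match C with
  | C1 => cut1 FR Z Yb Y
  | C2 ord => cut2 FR Z (ord Yb) Yb Y
  end.

Definition valid_family (n : nat) (Z : {set pair n}) (C : cut_family n) : Prop :=
  match C with
  | C1 => True
  | C2 ord => forall Yb, uniq (ord Yb) /\ (forall e, (e \in ord Yb) = (e \in Z :\: Yb))
  end.

Section Master.
Variables (R : realFieldType) (n : nat).
Variable FR : {set pair n} -> R.
Variables (Z : {set pair n}) (Ycal : {set pair n} -> Prop) (C : cut_family n).

Definition feasible (Y : {set pair n}) : Prop := Y \subset Z /\ Ycal Y.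

Definition master_feas (cuts : {set pair n} -> Prop) (theta : R) (Y : {set pair n}) :=
  [/\ 0 <= theta, feasible Y & forall Yb, cuts Yb -> cutrhs FR Z C Yb Y <= theta].

Definition master_opt (cuts : {set pair n} -> Prop) (theta : R) (Y : {set pair n}) :=
  master_feas cuts theta Y /\
  forall theta' Y', master_feas cuts theta' Y' -> theta <= theta'.

(* a run of the cutting plane method that has not stopped yet:
   iterate k (theta_k, Y_k) is optimal for the master problem with the cuts
   C(Y_0), ..., C(Y_{k-1}), and the stopping test theta_k >= FR(Y_k) failed *)
Definition nonstop_run (s : seq (R * {set pair n})) : Prop :=
  forall k, (k < size s)%N ->
    let: (theta, Y) := nth (0, set0) s k in
    master_opt (fun Yb => Yb \in map snd (take k s)) theta Y /\ theta < FR Y.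

Definition optimal (Y : {set pair n}) : Prop :=
  feasible Y /\ forall Y', feasible Y' -> FR Y <= FR Y'.

End Master.

(* Main.v *)
Require Import Defs.
From mathcomp Require Import all_boot all_order all_algebra.
From mathcomp Require Import lra.
From Stdlib Require Import Classical_Prop.
Import Order.TTheory GRing.Theory Num.Theory.
Local Open Scope ring_scope.

Lemma argmin_ex (R : realFieldType) (T : finType) (P : T -> Prop) (f : T -> R) :
  (exists x, P x) -> exists x, P x /\ forall y, P y -> f x <= f y.
Proof.
move=> [x0 Px0].
suff H : forall l : seq T, (exists x, P x /\ x \in l) ->
  exists x, P x /\ forall y, P y -> y \in l -> f x <= f y.
  have [x [Px Hx]] := H (enum T) (ex_intro _ x0 (conj Px0 (mem_enum _ x0))).
  by exists x; split=> // y Py; apply: Hx; rewrite ?mem_enum.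
elim=> [|a l IH]; first by case=> x [_]; rewrite in_nil.
move=> Hex.
case: (classic (exists x, P x /\ x \in l)) => [Hl|Hl].
  have [x [Px Hx]] := IH Hl.
  case: (classic (P a)) => Pa.
    case: (lerP (f x) (f a)) => Hxa.
      exists x; split=> // y Py; rewrite in_cons => /orP[/eqP->//|]; exact: Hx.
    exists a; split=> // y Py; rewrite in_cons => /orP[/eqP->//|yl].
    by apply: le_trans (ltW Hxa) (Hx y Py yl).
  exists x; split=> // y Py; rewrite in_cons => /orP[/eqP Ey|]; last exact: Hx.
  by subst y.
have Pa : P a.
  case: Hex => x [Px]; rewrite in_cons => /orP[/eqP Ex|xl]; first by subst x.
  by exfalso; apply: Hl; exists x.
exists a; split=> // y Py; rewrite in_cons => /orP[/eqP->//|yl].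
by exfalso; apply: Hl; exists y.
Qed.

Lemma my_bigmin_le (R : realFieldType) (I : eqType) (r : seq I) (P : pred I)
  (F : I -> R) (x : R) (i : I) :
  i \in r -> P i -> \big[Num.min/x]_(j <- r | P j) F j <= F i.
Proof.
elim: r => [|a r IH] //; rewrite in_cons big_cons => /orP[/eqP <-|ir] Pi.
  by rewrite Pi ge_min lexx.
case: (P a); last exact: IH.
by rewrite ge_min (IH ir Pi) orbT.
Qed.

Lemma sum_le_one (R : realFieldType) (I : finType) (P : pred I) (F : I -> R) i :
  (forall j, P j -> F j <= 0) -> P i -> \sum_(j | P j) F j <= F i.
Proof.
move=> H Pi; rewrite (bigD1 i) //=.
rewrite -[leRHS]addr0 lerD2l.
by apply: (big_ind (fun x => x <= 0)) => //[x y|j /andP[Pj _]]; [lra|exact: H].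
Qed.

Lemma sum_le0 (R : realFieldType) (I : finType) (P : pred I) (F : I -> R) :
  (forall j, P j -> F j <= 0) -> \sum_(j | P j) F j <= 0.
Proof.
move=> H; apply: (big_ind (fun x => x <= 0)) => //.
  by move=> x y; lra.
Qed.

Lemma ge_min_l {R : realFieldType} (a b : R) : Num.min a b <= a.
Proof. by rewrite ge_min lexx. Qed.
Lemma ge_min_r {R : realFieldType} (a b : R) : Num.min a b <= b.
Proof. by rewrite ge_min lexx orbT. Qed.

Section C.
Variables (R : realFieldType) (n : nat) (FR : {set pair n} -> R) (Z : {set pair n}).

Lemma gamma_le (S N Y : {set pair n}) : Y \subset Z -> S \subset Y -> [disjoint Y & N] ->
  gamma FR Z S N <= FR Y.
Proof.
move=> YZ SY YN; rewrite /gamma.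
apply: (@my_bigmin_le _ _ _ (fun Y0 => (Y0 \in powerset Z) && ((S \subset Y0) && [disjoint Y0 & N]))); first exact: mem_index_enum.
by rewrite powersetE YZ SY YN.
Qed.

Lemma first_self (Y : {set pair n}) :
  \sum_(e in Y) Num.min 0 (gamma FR Z set0 [set e] - FR Y) * (1 - yv R Y e) = 0.
Proof. by rewrite big1 // => e eY; rewrite /yv eY subrr mulr0. Qed.

Lemma cut_self C (Y : {set pair n}) : valid_family Z C -> cutrhs FR Z C Y Y = FR Y.
Proof.
case: C => [|ord] /= H.
  rewrite /cut1 first_self addr0 big1 ?addr0 // => e.
  by rewrite in_setD => /andP[/negbTE eY _]; rewrite /yv eY mulr0.
rewrite /cut2 first_self addr0 big1 ?addr0 // => k _.
have [_ Hm] := H Y.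
have : tnth (in_tuple (ord Y)) k \in ord Y by rewrite mem_tnth.
by rewrite Hm in_setD => /andP[/negbTE eY _]; rewrite /yv eY mulr0.
Qed.

Lemma yv01 (Y : {set pair n}) e : 0 <= yv R Y e <= 1.
Proof. by rewrite /yv; case: (_ \in _); rewrite ?lexx ?ler01. Qed.

Lemma first_le0 (Yb Y : {set pair n}) :
  \sum_(e in Yb) Num.min 0 (gamma FR Z set0 [set e] - FR Yb) * (1 - yv R Y e) <= 0.
Proof.
apply: sum_le0 => e _; have := yv01 Y e; have := ge_min_l 0 (gamma FR Z set0 [set e] - FR Yb).
set a := Num.min _ _; set b := yv _ _ _; nra.
Qed.

Lemma first_le (Yb Y : {set pair n}) e : e \in Yb -> e \notin Y -> Y \subset Z ->
  FR Yb + \sum_(e in Yb) Num.min 0 (gamma FR Z set0 [set e] - FR Yb) * (1 - yv R Y e)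
  <= FR Y.
Proof.
move=> eYb eY YZ.
have H1 := @sum_le_one _ _ (mem Yb)
  (fun e => Num.min 0 (gamma FR Z set0 [set e] - FR Yb) * (1 - yv R Y e)).
have := H1 e; rewrite /yv (negbTE eY) subr0 mulr1 => H2.
have H3 : \sum_(e in Yb) Num.min 0 (gamma FR Z set0 [set e] - FR Yb) * (1 - yv R Y e) <=
   Num.min 0 (gamma FR Z set0 [set e] - FR Yb).
  apply: H2 => // j _; have := yv01 Y j; have := ge_min_l 0 (gamma FR Z set0 [set j] - FR Yb).
  rewrite /yv; set a := Num.min _ _; set b := (j \in Y)%:R; nra.
have H4 := ge_min_r 0 (gamma FR Z set0 [set e] - FR Yb).
have H5 : gamma FR Z set0 [set e] <= FR Y.
  apply: gamma_le => //; first exact: sub0set.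
  by rewrite disjoint_sym disjoints1.
lra.
Qed.


Lemma second_le0 (Yb Y : {set pair n}) :
  \sum_(e in Z :\: Yb) Num.min 0 (gamma FR Z [set e] set0 - FR Yb) * yv R Y e <= 0.
Proof.
apply: sum_le0 => e _; have := yv01 Y e; have := ge_min_l 0 (gamma FR Z [set e] set0 - FR Yb).
set a := Num.min _ _; set b := yv _ _ _; nra.
Qed.

Lemma second_le (Yb Y : {set pair n}) e : e \in Z :\: Yb -> e \in Y -> Y \subset Z ->
  FR Yb + \sum_(e in Z :\: Yb) Num.min 0 (gamma FR Z [set e] set0 - FR Yb) * yv R Y e
  <= FR Y.
Proof.
move=> eZ eY YZ.
have H1 := @sum_le_one _ _ (mem (Z :\: Yb))
  (fun e => Num.min 0 (gamma FR Z [set e] set0 - FR Yb) * yv R Y e).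
have := H1 e; rewrite /yv eY mulr1 => H2.
have H3 : \sum_(e in Z :\: Yb) Num.min 0 (gamma FR Z [set e] set0 - FR Yb) * yv R Y e <=
   Num.min 0 (gamma FR Z [set e] set0 - FR Yb).
  apply: H2 => // j _; have := yv01 Y j; have := ge_min_l 0 (gamma FR Z [set j] set0 - FR Yb).
  rewrite /yv; set a := Num.min _ _; set b := (j \in Y)%:R; nra.
have H4 := ge_min_r 0 (gamma FR Z [set e] set0 - FR Yb).
have H5 : gamma FR Z [set e] set0 <= FR Y.
  apply: gamma_le => //; first by rewrite sub1set.
  by rewrite disjoints_subset setC0 subsetT.
lra.
Qed.

Lemma third_le0 (s : seq (pair n)) (Yb Y : {set pair n}) :
  \sum_(k < size s)
      Num.min 0 (- FR Yb + gamma FR Z [set tnth (in_tuple s) k] [set x in drop k.+1 s])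
        * yv R Y (tnth (in_tuple s) k) <= 0.
Proof.
apply: sum_le0 => k _; have := yv01 Y (tnth (in_tuple s) k).
have := ge_min_l 0 (- FR Yb + gamma FR Z [set tnth (in_tuple s) k] [set x in drop k.+1 s]).
set a := Num.min _ _; set b := yv _ _ _; nra.
Qed.

Lemma third_le (s : seq (pair n)) (Yb Y : {set pair n}) e : e \in s -> e \in Y -> Y \subset Z ->
  FR Yb + \sum_(k < size s)
      Num.min 0 (- FR Yb + gamma FR Z [set tnth (in_tuple s) k] [set x in drop k.+1 s])
        * yv R Y (tnth (in_tuple s) k) <= FR Y.
Proof.
move=> es eY YZ.
pose P k := (k < size s)%N && (nth e s k \in Y).
have exP : exists k, P k by exists (index e s); rewrite /P index_mem es nth_index.
have ubP : forall k, P k -> (k <= size s)%N by move=> k /andP[/ltnW].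
case: (ex_maxnP exP ubP) => k /andP[ks kY] kmax.
pose i := Ordinal ks.
have ti : tnth (in_tuple s) i = nth e s k by rewrite (tnth_nth e).
have H1 := @sum_le_one _ _ xpredT
  (fun k => Num.min 0 (- FR Yb + gamma FR Z [set tnth (in_tuple s) k] [set x in drop k.+1 s])
        * yv R Y (tnth (in_tuple s) k)) i.
have H3 : \sum_(k < size s)
      Num.min 0 (- FR Yb + gamma FR Z [set tnth (in_tuple s) k] [set x in drop k.+1 s])
        * yv R Y (tnth (in_tuple s) k) <=
      Num.min 0 (- FR Yb + gamma FR Z [set tnth (in_tuple s) i] [set x in drop i.+1 s]).
  rewrite -[leRHS]mulr1 -[X in _ * X](_ : yv R Y (tnth (in_tuple s) i) = 1); last first.
    by rewrite /yv ti kY.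
  apply: H1 => // j _; have := yv01 Y (tnth (in_tuple s) j).
  have := ge_min_l 0 (- FR Yb + gamma FR Z [set tnth (in_tuple s) j] [set x in drop j.+1 s]).
  set a := Num.min _ _; set b := yv _ _ _; nra.
have H4 := ge_min_r 0 (- FR Yb + gamma FR Z [set tnth (in_tuple s) i] [set x in drop i.+1 s]).
have H5 : gamma FR Z [set tnth (in_tuple s) i] [set x in drop i.+1 s] <= FR Y.
  apply: gamma_le => //; first by rewrite sub1set ti.
  rewrite disjoints_subset; apply/subsetP => x xY; rewrite !inE; apply/negP => xd.
  have /nthP := xd => /(_ e) [j js xj].
  rewrite size_drop in js; rewrite nth_drop in xj.
  have : P (k.+1 + j)%N by rewrite /P xj xY andbT -ltn_subRL.
  by move/kmax; rewrite ltnNge leq_addr.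
lra.
Qed.

Lemma cut_valid C (Yb Y : {set pair n}) : valid_family Z C -> Yb \subset Z -> Y \subset Z ->
  cutrhs FR Z C Yb Y <= FR Y.
Proof.
move=> VC YbZ YZ.
have [<-|neq] := eqVneq Y Yb; first by rewrite cut_self.
have H12 := first_le0 Yb Y.
have [/subsetPn [e eYb eY] | sub] := boolP (~~ (Yb \subset Y)).
  have := first_le Yb Y e eYb eY YZ.
  case: C VC => [|ord] VC /=; [rewrite /cut1 | rewrite /cut2].
    have := second_le0 Yb Y; lra.
  have := third_le0 (ord Yb) Yb Y; lra.
have : ~~ (Y \subset Yb).
  apply: contra neq => YYb; rewrite eqEsubset YYb /=; exact: negbNE.
move=> /subsetPn [e eY eYb].
have eZ : e \in Z :\: Yb by rewrite in_setD eYb (subsetP YZ).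
case: C VC => [|ord] VC /=; [rewrite /cut1 | rewrite /cut2].
  have := second_le Yb Y e eZ eY YZ; lra.
have [_ Hm] := VC Yb.
have es : e \in ord Yb by rewrite Hm.
have := third_le (ord Yb) Yb Y e es eY YZ; lra.
Qed.

End C.

Section FR.
Variables (R : realFieldType) (n : nat) (alpha : R) (z : 'I_n -> R) (v : 'I_n).
Hypothesis ha : 0 <= alpha <= 1.
Hypothesis hz : forall u, 0 <= z u.
Hypothesis hz1 : \sum_u z u = 1.

Lemma card_ind (A : {set pair n}) u :
  \sum_w (((u, w) \in A)%:R : R) = (outdeg A u)%:R.
Proof.
rewrite /outdeg -natr_sum; congr (_%:R).
rewrite -sum1_card [RHS]big_mkcond /=; apply: eq_bigr => w _.
by rewrite inE; case: ((u, w) \in A).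
Qed.

Lemma walk_ge0 A u w : 0 <= walk_mx z A u w.
Proof.
rewrite mxE; case: (outdeg A u == 0)%N => //.
by apply: divr_ge0; rewrite ler0n.
Qed.

Lemma walk_row A u : \sum_w walk_mx z A u w = 1.
Proof.
under eq_bigr do rewrite mxE.
case: eqP => [//|H].
rewrite -mulr_suml card_ind mulfV // pnatr_eq0; exact/eqP.
Qed.

Lemma killed_ge0 A u w : 0 <= killed_mx alpha z v A u w.
Proof.
rewrite !mxE; case: (w == v) => //.
have := walk_ge0 A u w; rewrite mxE; have := hz w; case/andP: ha; nra.
Qed.

Lemma killed_row A u : \sum_w killed_mx alpha z v A u w <= 1.
Proof.
apply: (@le_trans _ _ (\sum_w google_mx alpha z A u w)).
  apply: ler_sum => w _; rewrite [killed_mx _ _ _ _ _ _]mxE.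
  case: (w == v) => //; rewrite mxE.
  have := walk_ge0 A u w; rewrite mxE; have := hz w; case/andP: ha; nra.
under eq_bigr do rewrite mxE.
rewrite big_split /= -!mulr_sumr hz1; have := walk_row A u; under eq_bigr do rewrite mxE; case/andP: ha; move=> W a1 ->; lra.
Qed.

Lemma FR_ge0 A : 0 <= first_return_time alpha z v A.
Proof.
rewrite /first_return_time /hitting_times.
set K := killed_mx alpha z v A.
set h := invmx (1%:M - K) *m const_mx 1.
case: (boolP (1%:M - K \in unitmx)) => U; last first.
  rewrite /h invmx_out // mulmxBl mul1mx !mxE.
  under eq_bigr do rewrite [const_mx _ _ _]mxE mulr1.
  have := killed_row A v; rewrite -/K; lra.
have Eq : (1%:M - K) *m h = const_mx 1 by rewrite /h mulmxA mulmxV // mul1mx.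
clearbody h.
have Hu : forall u, h u 0 = 1 + \sum_w K u w * h w 0.
  move=> u; have := congr1 (fun M : 'cV[R]_n => M u 0) Eq; rewrite mulmxBl mul1mx /= !mxE.
  move=> <-; lra.
have [u0 [_ Hm]] := @argmin_ex R _ (fun _ => True) (fun w => h w 0) (ex_intro _ v I).
suff : 0 <= h u0 0 by move=> H; apply: le_trans H (Hm v I).
rewrite leNgt; apply/negP => Hneg.
have S1 : \sum_w K u0 w * h u0 0 <= \sum_w K u0 w * h w 0.
  apply: ler_sum => w _; apply: ler_wpM2l; [exact: killed_ge0 | exact: Hm].
rewrite -mulr_suml in S1.
have := killed_row A u0; rewrite -/K => S2.
have S3 := Hu u0.
have S4 : 0 <= \sum_w K u0 w by apply: sumr_ge0 => w _; exact: killed_ge0.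
move: S1 S2 S3 S4 Hneg.
move: (h u0 0) (\sum_w K u0 w) (\sum_w K u0 w * h w 0) => m S T.
nra.
Qed.

End FR.

Section Fold.
Variables (R : realFieldType) (T : eqType) (g : T -> R).
Definition fmax (l : seq T) := foldr (fun a acc => Num.max (g a) acc) 0 l.
Lemma fmax_ge0 l : 0 <= fmax l.
Proof. by elim: l => [|a l IH] //=; rewrite le_max IH orbT. Qed.
Lemma fmax_ge (l : seq T) a : a \in l -> g a <= fmax l.
Proof.
elim: l => [|b l IH] //=; rewrite in_cons => /orP[/eqP->|al]; rewrite le_max ?lexx //.
by rewrite IH ?orbT.
Qed.
Lemma fmax_le (l : seq T) t : 0 <= t -> (forall a, a \in l -> g a <= t) -> fmax l <= t.
Proof.
move=> t0; elim: l => [|b l IH] //= H; rewrite ge_max H ?mem_head //=.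
by apply: IH => a al; apply: H; rewrite in_cons al orbT.
Qed.
End Fold.
Arguments fmax {R T} g l.
Arguments fmax_ge0 {R T} g l.
Arguments fmax_ge {R T} g l a.
Arguments fmax_le {R T} g l t.

Theorem proposition3 (R : realFieldType) (n : nat) (alpha : R) (z : 'I_n -> R)
  (v : 'I_n) (E Z : {set pair n}) (Ycal : {set pair n} -> Prop)
  (C : cut_family n) :
  0 < alpha < 1 ->
  (forall u, 0 < z u) -> \sum_u z u = 1 ->
  [disjoint Z & E] ->
  (exists Y, feasible Z Ycal Y) ->
  valid_family Z C ->
  let FR := fun Y : {set pair n} => first_return_time alpha z v (E :|: Y) in
  (forall s, nonstop_run FR Z Ycal C s ->
     exists theta Y, master_opt FR Z Ycal C (fun Yb => Yb \in map snd s) theta Y) /\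
  (exists N : nat, forall s, nonstop_run FR Z Ycal C s -> (size s <= N)%N) /\
  (forall s theta Y, nonstop_run FR Z Ycal C s ->
     master_opt FR Z Ycal C (fun Yb => Yb \in map snd s) theta Y ->
     FR Y <= theta -> optimal FR Z Ycal Y) /\
  (exists theta Y, master_opt FR Z Ycal C (feasible Z Ycal) theta Y) /\
  (forall theta Y, master_opt FR Z Ycal C (feasible Z Ycal) theta Y ->
     exists Y', optimal FR Z Ycal Y' /\ theta = FR Y').
Proof.
move=> /andP[a0 a1] hz hz1 _ hex VC FR.
have FRge0 : forall Y, 0 <= FR Y.
  move=> Y; apply: FR_ge0 => //; first by rewrite !ltW.
  by move=> u; apply: ltW.
have valid : forall Yb Y : {set pair n}, Yb \subset Z -> Y \subset Z -> cutrhs FR Z C Yb Y <= FR Y.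
  by move=> Yb Y; apply: cut_valid.
have self : forall Y : {set pair n}, cutrhs FR Z C Y Y = FR Y by move=> Y; apply: cut_self.
have cuts_feas : forall s (Yb : {set pair n}), nonstop_run FR Z Ycal C s -> Yb \in map snd s ->
    feasible Z Ycal Yb.
  move=> s Yb hs /(nthP set0) [k]; rewrite size_map => ks.
  rewrite (nth_map (0, set0)) // => <-.
  have := hs k ks; case: (nth (0, set0) s k) => th Y [[[_ hf _] _] _]; exact: hf.
split.
  move=> s _.
  pose vl Y := fmax (fun Yb => cutrhs FR Z C Yb Y) (map snd s).
  have [Y [hf hmin]] := @argmin_ex R _ (feasible Z Ycal) vl hex.
  exists (vl Y), Y; split.
    split => //; first exact: fmax_ge0.
    by move=> Yb hYb; apply: (fmax_ge (fun Yb => cutrhs FR Z C Yb Y)).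
  move=> th Y' [h0 hf' hc]; apply: le_trans (hmin Y' hf') _.
  exact: (fmax_le (fun Yb => cutrhs FR Z C Yb Y')).
split.
  exists #|{: {set pair n}}| => s hs.
  have U : uniq (map snd s).
    apply/(uniqP set0) => i j; rewrite !inE size_map => hi hj.
    suff H : forall i j, (i < j < size s)%N ->
        nth set0 (map snd s) i <> nth set0 (map snd s) j.
      case: (ltngtP i j) => [ij|ji|//] E'.
        by exfalso; apply: (H i j) => //; rewrite ij hj.
      by exfalso; apply: (H j i) => //; rewrite ji hi.
    move=> {hi hj i j} i j /andP[ij js] Eij.
    have := hs j js.
    rewrite [RHS](nth_map (0, set0) set0 _ js) in Eij.
    case E': (nth (0, set0) s j) Eij => [th Y] Eij /= [[[h0 hf hc] _] hlt].
    have : cutrhs FR Z C Y Y <= th.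
      apply: hc; simpl in Eij; rewrite -Eij map_take -(nth_take _ ij).
      by apply: mem_nth; rewrite size_take size_map js.
    by rewrite self; lra.
  by rewrite -(size_map snd) -(card_uniqP U); apply: max_card.
split.
  move=> s th Y hs [[h0 hf hc] hopt] hle; split => // Y' hf'.
  apply: le_trans hle _; apply: (hopt (FR Y') Y'); split => //.
  move=> Yb hYb; apply: valid; last by case: hf'.
  by case: (cuts_feas s Yb hs hYb).
split.
  have [Y [hf hmin]] := @argmin_ex R _ (feasible Z Ycal) FR hex.
  exists (FR Y), Y; split.
    split => // Yb hYb; apply: valid; [by case: hYb | by case: hf].
  move=> th Y' [h0 hf' hc]; apply: le_trans (hmin Y' hf') _.
  by rewrite -self; apply: hc.
move=> th Y [[h0 hf hc] hopt].
have feasY : forall Y', feasible Z Ycal Y' ->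
    master_feas FR Z Ycal C (feasible Z Ycal) (FR Y') Y'.
  move=> Y' hf'; split => // Yb hYb; apply: valid; [by case: hYb | by case: hf'].
have eq : th = FR Y.
  apply/le_anti; rewrite (hopt _ _ (feasY Y hf)) /=.
  by rewrite -self; apply: hc.
exists Y; split => //; split => // Y' hf'; rewrite -eq; exact: hopt _ _ (feasY Y' hf').
Qed.
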